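(* Let $\mathcal{P}$ be a poset with at least two elements having the Unique Cover Twin Property, let $n\ge 3$, and let $\mathcal{F}$ be an induced-$\mathcal{P}$-saturated family in $\mathcal{B}_n$. If there exist distinct $x,y\in[n]$ such that no $F\in\mathcal{F}$ satisfies $|F\cap\{x,y\}|=1$, then $\{x,y\}\subseteq F$ for all $F\in\mathcal{F}$.
   Context: In a poset $(P,\le)$, $y$ covers $x$ if $x<y$ and there is no $z$ with $x<z<y$. A poset $\mathcal{P}=(P,\le)$ has the Unique Cover Twin Property (UCTP) if for every $S\in P$ that has exactly one cover $T\in P$, there exists $S'\in P$ with $S'\ne S$ such that $T$ also covers $S'$. $\mathcal{B}_n$ denotes the Boolean lattice $(2^{[n]},\subseteq)$. A family $\mathcal{F}\subseteq 2^{[n]}$ (ordered by inclusion) is induced-$\mathcal{P}$-saturated if it contains no induced copy of $\mathcal{P}$ (an injection $f$ with $u\le v\iff f(u)\subseteq f(v)$) but every family $\mathcal{F}'$ with $\mathcal{F}\subsetneq\mathcal{F}'\subseteq 2^{[n]}$ contains one. *)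

(* Defs.v *)
From mathcomp Require Import all_boot all_order.
Set Implicit Arguments. Unset Strict Implicit. Unset Printing Implicit Defensive.
Import Order.TTheory.
Local Open Scope order_scope.

Definition covers (d : Order.disp_t) (P : finPOrderType d) (x y : P) : Prop :=
  x < y /\ ~ (exists z : P, x < z /\ z < y).

Definition UCTP (d : Order.disp_t) (P : finPOrderType d) : Prop :=
  forall S T : P,
    (forall T' : P, covers S T' <-> T' = T) ->
    exists S' : P, S' <> S /\ covers S' T.

Definition has_induced_copy (d : Order.disp_t) (P : finPOrderType d) (n : nat)
    (F : {set {set 'I_n}}) : Prop :=
  exists f : P -> {set 'I_n},
    injective f /\ (forall u, f u \in F) /\
    (forall u v : P, u <= v <-> f u \subset f v).

Definition induced_saturated (d : Order.disp_t) (P : finPOrderType d) (n : nat)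
    (F : {set {set 'I_n}}) : Prop :=
  ~ has_induced_copy P F /\
  (forall F' : {set {set 'I_n}}, F \proper F' -> has_induced_copy P F').

(* Main.v *)
Require Import Defs.
From mathcomp Require Import all_boot all_order.
Set Implicit Arguments. Unset Strict Implicit. Unset Printing Implicit Defensive.
Import Order.TTheory.
Local Open Scope order_scope.

Lemma xy_eq n (x y : 'I_n) (B : {set 'I_n}) :
  x != y -> #|B :&: [set x; y]| <> 1%N -> (x \in B) = (y \in B).
Proof.
move=> nxy H; case Hx: (x \in B); case Hy: (y \in B) => //; exfalso; apply: H.
- have -> : B :&: [set x; y] = [set x]; last by rewrite cards1.
  apply/setP=> z; rewrite !inE; case: (eqVneq z x) => [->|nzx]; rewrite ?Hx //=.
  by case: (eqVneq z y) => [->|]; rewrite ?Hy ?andbF ?andbT.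
- have -> : B :&: [set x; y] = [set y]; last by rewrite cards1.
  apply/setP=> z; rewrite !inE; case: (eqVneq z y) => [->|nzy]; rewrite ?Hy ?orbT //=.
  by case: (eqVneq z x) => [->|]; rewrite ?Hx ?andbF ?andbT.
Qed.

Theorem lemma3p8 (d : Order.disp_t) (P : finPOrderType d) (n : nat)
    (F : {set {set 'I_n}}) (x y : 'I_n) :
  (2 <= #|P|)%N -> UCTP P -> (3 <= n)%N -> induced_saturated P F ->
  x != y ->
  (forall A, A \in F -> #|A :&: [set x; y]| <> 1%N) ->
  forall A, A \in F -> [set x; y] \subset A.
Proof.
move=> _ uctp _ [nocopy sat] nxy H1 A AF.
have EQ : forall B, B \in F -> (x \in B) = (y \in B).
  by move=> B BF; apply: xy_eq => //; apply: H1.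
rewrite subUset !sub1set -(EQ _ AF) andbb.
apply/negPn/negP => xA.
pose Q := fun B : {set 'I_n} => (B \in F) && (x \notin B).
have QA : Q A by rewrite /Q AF xA.
case: (@arg_maxnP _ A Q (fun B : {set 'I_n} => #|B|) QA) => A0 /andP [A0F xA0] A0max.
have yA0 : y \notin A0 by rewrite -(EQ _ A0F).
pose G := x |: A0.
have GnF : G \notin F.
  apply/negP => GF; move: (EQ _ GF); rewrite /G !inE eqxx /=.
  by rewrite eq_sym (negbTE nxy) (negbTE yA0).
have A0G : A0 \subset G by apply: subsetUr.
have Ha : forall B, B \in F -> B \subset G -> B \subset A0.
  move=> B BF /subsetP BG; apply/subsetP => z zB.
  move: (BG z zB); rewrite /G !inE; case/orP => // /eqP ez.
  move: zB; rewrite ez => xB; move: (EQ _ BF); rewrite xB => /esym yB.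
  move: (BG y yB); rewrite /G !inE (negbTE yA0) orbF => /eqP eyx.
  by move: nxy; rewrite eyx eqxx.
have Hb : forall B, B \in F -> A0 \subset B -> B != A0 -> G \subset B.
  move=> B BF A0B BA0; rewrite /G subUset sub1set A0B andbT.
  apply/negPn/negP => xB.
  have := A0max B; rewrite /Q BF xB => /(_ isT) cB.
  have : B == A0 by rewrite eq_sym eqEcard A0B; exact: cB.
  by rewrite (negbTE BA0).
have prop : F \proper G |: F.
  rewrite properE subsetUr /= subUset sub1set (negbTE GnF) //.
case: (sat _ prop) => f [finj [fin ford0]].
have ford : forall u v, (u <= v) = (f u \subset f v).
  by move=> u v; apply/idP/idP => /ford0.
have fF : forall u, f u != G -> f u \in F.
  by move=> u; move: (fin u); rewrite !inE => /orP [/eqP ->|//]; rewrite eqxx.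
case: (pickP (fun u => f u == G)) => [u0 /eqP fu0|nof]; last first.
  apply: nocopy; exists f; split => //; split => // u.
  by apply: fF; rewrite nof.
have fF' : forall u, u != u0 -> f u \in F.
  move=> u nu; apply: fF; rewrite -fu0; apply/eqP => /finj eu.
  by move: nu; rewrite eu eqxx.
case: (pickP (fun w => f w == A0)) => [w /eqP fw|noA0].
-
  have wu0 : w != u0.
    apply/eqP => ew; move: fw; rewrite ew fu0 => GA0.
    by move: xA0; rewrite -GA0 /G !inE eqxx.
  have wltu0 : w < u0 by rewrite lt_neqAle wu0 /= ford fw fu0.
  have above : forall z, z != w -> w < z -> u0 <= z.
    move=> z zw wz.
    case: (eqVneq z u0) => [->|zu0]; first exact: lexx.
    have := Hb (f z) (fF' _ zu0).
    rewrite -fw -!ford; move/(_ (ltW wz)) => H.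
    rewrite ford fu0 H //; apply/eqP => /finj ez.
    by move: zw; rewrite ez eqxx.
  have cov : covers w u0.
    split => // [[z [wz zu]]].
    have zw : z != w by apply/eqP => ez; move: wz; rewrite ez ltxx.
    by have := above z zw wz; rewrite (lt_geF zu).
  have := uctp w u0.
  case.
    move=> T'; split; last by move=> ->.
    move=> [wT nz]; case: (eqVneq T' u0) => // Tu.
    have Tw : T' != w by apply/eqP => ez; move: wT; rewrite ez ltxx.
    exfalso; apply: nz; exists u0; split => //.
    by rewrite lt_neqAle eq_sym Tu above.
  move=> S' [Sw [Su nz]].
  have Su0 : S' != u0 by apply/eqP => ez; move: Su; rewrite ez ltxx.
  have : f S' \subset A0.
    by apply: Ha (fF' _ Su0) _; rewrite -fu0 -ford ltW.
  rewrite -fw -ford => Sle.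
  apply: nz; exists w; split => //.
  by rewrite lt_neqAle Sle andbT; apply/eqP.
-
  apply: nocopy.
  exists (fun v => if v == u0 then A0 else f v); split; [|split].
  + move=> u v /=.
    case: (eqVneq u u0) => [->|uu]; case: (eqVneq v u0) => [->|vu] //.
    * by move=> e; move: (noA0 v); rewrite -e eqxx.
    * by move=> e; move: (noA0 u); rewrite e eqxx.
    * by apply: finj.
  + by move=> u /=; case: (eqVneq u u0) => [_|uu] //; apply: fF'.
  + move=> u v /=.
    case: (eqVneq u u0) => [->|uu]; case: (eqVneq v u0) => [->|vu].
    * by rewrite lexx subxx.
    * rewrite ford fu0; split => [GB|A0B]; first exact: subset_trans A0G GB.
      by apply: Hb (fF' _ vu) A0B _; rewrite eq_sym; apply/negP => /eqP e; move: (noA0 v); rewrite -e eqxx.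
    * rewrite ford fu0; split => [BG|BA0]; first exact: Ha (fF' _ uu) BG.
      exact: subset_trans BA0 A0G.
    * exact: ford0.
Qed.
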